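(* Let $\vartheta$ be a primitive semi-compatible random substitution with PF eigenvalue $\lambda$ and normalised right PF eigenvector $\bm R$, let $K=\max_i\ell_{1,i}$, $I_N=\vartheta(\mathcal L)\cap\mathcal L_N$, and for $\varepsilon>0$ put $\lambda^\pm_\varepsilon=\lambda\pm\varepsilon nK$. For every $\varepsilon>0$ with $\lambda>\varepsilon nK$ there is $N_0$ such that for all $N\geqslant N_0$, \[ \#I_N\;\leqslant\;N\Bigl(\frac{1}{\lambda^-_\varepsilon}-\frac{1}{\lambda^+_\varepsilon}\Bigr)\bigl(\#\mathcal L_{\lfloor N/\lambda^-_\varepsilon\rfloor}\bigr)\prod_{i=1}^n(\#\vartheta(a_i))^{(R_i+\varepsilon)N/\lambda^-_\varepsilon}. \]
   Context: Let $\mathcal A=\{a_1,\dots,a_n\}$ be a finite alphabet ($n=\#\mathcal A$), $\mathcal A^+$ the finite non-empty words over $\mathcal A$. A random substitution is a map $\vartheta$ from $\mathcal A$ to finite non-empty subsets of $\mathcal A^+$, extended to words by $\vartheta(u_1\cdots u_m)=\{w_1\cdots w_m: w_k\in\vartheta(u_k)\}$ and to sets of words by unions. $|u|$ is the length and $|u|_a$ the number of occurrences of letter $a$ in $u$; $\Phi(u)=(|u|_{a_1},\dots,|u|_{a_n})^\intercal$. $\vartheta$ is semi-compatible if for each $a$ all words in $\vartheta(a)$ have the same $\Phi$; then all words in $\vartheta(a_i)$ have common length $\ell_{1,i}$. Substitution matrix: $M_{ij}=|u|_{a_i}$, $u\in\vartheta(a_j)$; primitive means $M$ primitive, with Perron–Frobenius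 eigenvalue $\lambda$ and right PF eigenvector $\bm R=(R_1,\dots,R_n)^\intercal$, $\|\bm R\|_1=1$. The language $\mathcal L$ is the set of all subwords of words in $\vartheta^m(a)$, $a\in\mathcal A$, $m\in\mathbb N$, and $\mathcal L_\ell=\{v\in\mathcal L:|v|=\ell\}$. *)

(* Defs.v *)
From mathcomp Require Import all_boot.
From Stdlib Require Import Reals ClassicalEpsilon.
Set Implicit Arguments. Unset Strict Implicit. Unset Printing Implicit Defensive.

Definition pbool (P : Prop) : bool :=
  if excluded_middle_informative P then true else false.

Section RandSubst.
Variable A : finType.
(* A random substitution: each letter is sent to a finite non-empty set of
   non-empty words, represented by a list (the set is its set of members). *)
Variable theta : A -> seq (seq A).

Definition is_rand_subst : Prop :=
  forall a, theta a <> [::] /\ forall w, w \in theta a -> w <> [::].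

Definition card_img (a : A) : nat := size (undup (theta a)).

Fixpoint theta_word (u : seq A) : seq (seq A) :=
  match u with
  | [::] => [:: [::]]
  | a :: u' => [seq x ++ y | x <- theta a, y <- theta_word u']
  end.

Definition theta_set (S : seq (seq A)) : seq (seq A) :=
  flatten [seq theta_word w | w <- S].

Definition theta_pow (m : nat) (a : A) : seq (seq A) := iter m theta_set [:: [:: a]].

Definition semi_compatible : Prop :=
  forall a u v, u \in theta a -> v \in theta a -> forall b, count_mem b u = count_mem b v.

(* ell_{1,a}: the common length of the words in theta(a) *)
Definition ell1 (a : A) : nat := size (head [::] (theta a)).
Definition Kmax : nat := \max_(a : A) ell1 a.

Definition subst_mx (b a : A) : nat := count_mem b (head [::] (theta a)).

Fixpoint mx_pow (k : nat) : A -> A -> nat :=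
  match k with
  | 0 => fun b a => nat_of_bool (b == a)
  | k'.+1 => fun b a => \sum_(c : A) subst_mx b c * mx_pow k' c a
  end.

Definition primitive_subst : Prop :=
  exists k, 0 < k /\ forall b a, 0 < mx_pow k b a.

(* lam is the Perron-Frobenius eigenvalue of M and Rv its right PF eigenvector
   normalised in l^1: a strictly positive right eigenvector with sum 1. *)
Definition PF_data (lam : R) (Rv : A -> R) : Prop :=
  (0 < lam)%R /\ (forall a, 0 < Rv a)%R /\
  foldr Rplus 0%R (map Rv (enum A)) = 1%R /\
  forall b, foldr Rplus 0%R
              (map (fun c => INR (subst_mx b c) * Rv c)%R (enum A)) = (lam * Rv b)%R.

Definition inL (v : seq A) : Prop :=
  exists a m w, w \in theta_pow m a /\ infix v w.

Definition Lcard (l : nat) : nat := #|[set t : l.-tuple A | pbool (inL t)]|.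

Definition Icard (N : nat) : nat :=
  #|[set t : N.-tuple A |
      pbool (inL t /\ exists v, inL v /\ (t : seq A) \in theta_word v)]|.

End RandSubst.

Definition floorR (x : R) : nat := Z.to_nat (Int_part x).

Definition prodA (A : finType) (f : A -> R) : R := foldr Rmult 1%R (map f (enum A)).

(* Main.v *)
Require Import Defs.
From mathcomp Require Import all_boot.
From Stdlib Require Import Reals.
From HB Require Import structures.
From Stdlib Require Import Lra Classical ClassicalEpsilon.
From Stdlib Require Znat.
Set Implicit Arguments. Unset Strict Implicit. Unset Printing Implicit Defensive.

Section Comb.
Variable A : finType.
Variable theta : A -> seq (seq A).

Definition trel k (u w : seq A) := w \in iter k (theta_set theta) [:: u].

Lemma tw_catP x y w : w \in theta_word theta (x ++ y) <->
  exists w1 w2, [/\ w = w1 ++ w2, w1 \in theta_word theta x & w2 \in theta_word theta y].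
Proof.
elim: x w => [|a x IH] w /=.
  split; first by move=> H; exists [::], w; rewrite inE.
  by case=> w1 [w2 [-> ]]; rewrite inE => /eqP -> .
split.
  case/allpairsP=> [[p q] [/= Hp Hq ->]].
  case/IH: Hq => w1 [w2 [-> H1 H2]].
  exists (p ++ w1), w2; split => //; first by rewrite catA.
  by apply/allpairsP; exists (p, w1).
case=> w1 [w2 [-> /allpairsP [[p q] [/= Hp Hq ->]] H2]].
apply/allpairsP; exists (p, q ++ w2); split => //=; last by rewrite catA.
by apply/IH; exists q, w2.
Qed.

Lemma tset_P S w : w \in theta_set theta S <-> exists2 s, s \in S & w \in theta_word theta s.
Proof. by split => [/flatten_mapP|H]; [|apply/flatten_mapP]. Qed.

Lemma iter_P k S w : w \in iter k (theta_set theta) S <-> exists2 s, s \in S & trel k s w.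
Proof.
elim: k w => [|k IH] w /=.
  split; first by move=> H; exists w; rewrite // /trel /= inE.
  by case=> s Hs; rewrite /trel /= inE => /eqP ->.
rewrite tset_P; split.
  case=> s /IH [s0 Hs0 Hr] Hw; exists s0 => //.
  by rewrite /trel /= tset_P; exists s.
case=> s0 Hs0; rewrite /trel /= tset_P => -[s Hs Hw].
by exists s => //; apply/IH; exists s0.
Qed.

Lemma relS k u w : trel k.+1 u w <-> exists s, trel k u s /\ w \in theta_word theta s.
Proof.
rewrite /trel /= tset_P; split; first by case=> s Hs Hw; exists s.
by case=> s [Hs Hw]; exists s.
Qed.

Lemma rel0 u w : trel 0 u w <-> w = u.
Proof. by rewrite /trel /= inE; split => [/eqP|->]. Qed.

Lemma rel_cat k x y x' y' : trel k x x' -> trel k y y' -> trel k (x ++ y) (x' ++ y').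
Proof.
elim: k x' y' => [|k IH] x' y'; first by move=> /rel0 -> /rel0 ->; apply/rel0.
move=> /relS [s1 [H1 H1']] /relS [s2 [H2 H2']].
apply/relS; exists (s1 ++ s2); split; first exact: IH.
by apply/tw_catP; exists x', y'.
Qed.

Lemma rel_split k x y w : trel k (x ++ y) w ->
  exists w1 w2, [/\ w = w1 ++ w2, trel k x w1 & trel k y w2].
Proof.
elim: k w => [|k IH] w.
  by move/rel0 ->; exists x, y; split => //; apply/rel0.
case/relS => s [/IH [s1 [s2 [-> H1 H2]]] /tw_catP [w1 [w2 [-> Hw1 Hw2]]]].
by exists w1, w2; split => //; apply/relS; [exists s1 | exists s2].
Qed.

Lemma rel_add i j u w : trel (j + i) u w <-> exists s, trel i u s /\ trel j s w.
Proof.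
rewrite /trel iterD iter_P; split; first by case=> s Hs Hw; exists s.
by case=> s [Hs Hw]; exists s.
Qed.

Lemma theta_powE k a w : (w \in theta_pow theta k a) = (trel k [:: a] w).
Proof. by []. Qed.

End Comb.

Section Count.
Variable A : finType.
Variable theta : A -> seq (seq A).
Hypothesis Hrs : is_rand_subst theta.
Hypothesis Hsc : semi_compatible theta.

Lemma sum_seq_count (s : seq A) (f : A -> nat) :
  \sum_(c <- s) f c = \sum_(c : A) count_mem c s * f c.
Proof.
elim: s => [|x s IH]; first by rewrite big_nil big1 // => c _; rewrite mul0n.
rewrite big_cons IH /=.
have -> : \sum_(c : A) ((x == c) + count_mem c s) * f c =
   \sum_(c : A) ((x == c) * f c) + \sum_(c : A) count_mem c s * f c.
  by rewrite -big_split /=; apply: eq_bigr => c _; rewrite mulnDl.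
congr (_ + _); rewrite (bigD1 x) //= eqxx mul1n big1 ?addn0 // => c /negbTE.
by rewrite eq_sym => ->.
Qed.

Lemma size_count (s : seq A) : size s = \sum_(c : A) count_mem c s.
Proof.
have := sum_seq_count s (fun _ => 1); rewrite big_const_seq count_predT iter_addn_0 mul1n.
by move=> ->; apply: eq_bigr => c _; rewrite muln1.
Qed.

Lemma head_in a : head [::] (theta a) \in theta a.
Proof. by case: (Hrs a) => + _; case: (theta a) => //= x s _; rewrite inE eqxx. Qed.

Lemma count_theta a x b : x \in theta a -> count_mem b x = subst_mx theta b a.
Proof. by move=> Hx; rewrite /subst_mx; apply: (Hsc Hx (head_in a)). Qed.

Lemma count_tw u w b : w \in theta_word theta u -> count_mem b w = \sum_(c <- u) subst_mx theta b c.
Proof.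
elim: u w => [|a u IH] w /=; first by rewrite inE => /eqP ->; rewrite big_nil.
case/allpairsP => [[p q] [/= Hp Hq ->]].
by rewrite count_cat big_cons (count_theta b Hp) (IH _ Hq).
Qed.

Lemma mx_powS k b a : mx_pow theta k.+1 b a = \sum_c subst_mx theta b c * mx_pow theta k c a.
Proof. by []. Qed.

Lemma count_rel1 k a w b : trel theta k [:: a] w -> count_mem b w = mx_pow theta k b a.
Proof.
elim: k w b => [|k IH] w b.
  by move/rel0 => ->; rewrite /= addn0 eq_sym.
case/relS => s [Hs Hw]; rewrite (count_tw b Hw) sum_seq_count mx_powS.
by apply: eq_bigr => c _; rewrite (IH _ _ Hs) mulnC.
Qed.

Lemma count_rel k u w b : trel theta k u w -> count_mem b w = \sum_(c <- u) mx_pow theta k b c.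
Proof.
elim: u w => [|a u IH] w.
  rewrite big_nil => H; suff -> : w = [::] by [].
  elim: k w H => [|k IHk] w; first by move/rel0 ->.
  by case/relS => s [/IHk -> ]; rewrite /= inE => /eqP.
rewrite -cat1s => /rel_split [w1 [w2 [-> H1 H2]]].
by rewrite count_cat big_cons (count_rel1 _ H1) (IH _ H2).
Qed.

Lemma mx_pow_add k j b a :
  mx_pow theta (k + j) b a = \sum_c mx_pow theta k b c * mx_pow theta j c a.
Proof.
elim: k b a => [|k IH] b a.
  rewrite add0n (bigD1 b) //= eqxx mul1n big1 ?addn0 // => c /negbTE.
  by rewrite eq_sym => ->.
rewrite addSn mx_powS.

rewrite (eq_bigr (fun c => \sum_d subst_mx theta b c * (mx_pow theta k c d * mx_pow theta j d a))); last first.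
  by move=> c _; rewrite IH big_distrr.
rewrite exchange_big /=; apply: eq_bigr => d _.
by rewrite big_distrl /=; apply: eq_bigr => c _; rewrite mulnA.
Qed.

End Count.

Lemma Rplus_assoc' : associative Rplus.
Proof. by move=> x y z; rewrite Rplus_assoc. Qed.
HB.instance Definition _ := Monoid.isComLaw.Build R 0%R Rplus Rplus_assoc' Rplus_comm Rplus_0_l.

Section RS.
Variable A : finType.
Local Open Scope R_scope.
Definition rsum (f : A -> R) := \big[Rplus/0]_(c : A) f c.

Lemma foldr_rsum f : foldr Rplus 0 (map f (enum A)) = rsum f.
Proof.
rewrite /rsum -big_enum /=; elim: (enum A) => [|x s IH]; first by rewrite big_nil.
by rewrite big_cons /= IH.
Qed.

Lemma rsum_ext f g : (forall c, f c = g c) -> rsum f = rsum g.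
Proof. by move=> H; apply: eq_bigr => c _. Qed.

Lemma rsum_add f g : rsum (fun c => f c + g c) = rsum f + rsum g.
Proof. by rewrite /rsum big_split. Qed.

Lemma rsum_scal k f : rsum (fun c => k * f c) = k * rsum f.
Proof.
rewrite /rsum; apply: (big_rec2 (fun x y => x = k * y)); first by ring.
by move=> i x y _ ->; ring.
Qed.

Lemma rsum_sub f g : rsum (fun c => f c - g c) = rsum f - rsum g.
Proof.
have := rsum_add f (fun c => - g c).
have -> : rsum (fun c => - g c) = - rsum g.
  by rewrite (rsum_ext (g := fun c => -1 * g c)) ?rsum_scal => *; ring.
by rewrite /Rminus => <-.
Qed.

Lemma rsum_le f g : (forall c, f c <= g c) -> rsum f <= rsum g.
Proof.
move=> H; rewrite /rsum; apply: (big_rec2 (fun x y => x <= y)); first lra.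
by move=> i x y _ Hxy; have := H i; lra.
Qed.

Lemma rsum_ge0 f : (forall c, 0 <= f c) -> 0 <= rsum f.
Proof.
move=> H; have := rsum_le (f := fun _ => 0) (g := f) H.
suff -> : rsum (fun _ : A => 0) = 0 by [].
by rewrite /rsum big1.
Qed.

Lemma rsum_term f a : (forall c, 0 <= f c) -> f a <= rsum f.
Proof.
move=> H; rewrite /rsum (bigD1 a) //=.
have : 0 <= \big[Rplus/0]_(c | c != a) f c.
  by apply: (big_ind (fun x => 0 <= x)) => //; [lra | move=> x y; lra].
lra.
Qed.

Lemma INR_sum (n : A -> nat) : INR (\sum_c n c) = rsum (fun c => INR (n c)).
Proof.
rewrite /rsum; apply: (big_rec2 (fun x y => INR x = y)) => //.
by move=> i x y _ <-; rewrite plus_INR.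
Qed.

Lemma rsum_swap (f : A -> A -> R) : rsum (fun c => rsum (f c)) = rsum (fun d => rsum (fun c => f c d)).
Proof. by rewrite /rsum exchange_big. Qed.

End RS.

Lemma Rdiv_le_0_compat (a b : R) : (0 <= a)%R -> (0 < b)%R -> (0 <= a / b)%R.
Proof. by move=> Ha Hb; apply: Rmult_le_pos => //; left; apply: Rinv_0_lt_compat. Qed.

Section PF.
Variable A : finType.
Variable theta : A -> seq (seq A).
Variables (lam : R) (Rv : A -> R).
Hypothesis HPF : PF_data theta lam Rv.
Variable p : nat.
Hypothesis Hp : forall b a, (0 < mx_pow theta p b a)%N.
Variable a0 : A.
Local Open Scope R_scope.

Lemma lam_pos : 0 < lam. Proof. by case: HPF. Qed.
Lemma Rv_pos b : 0 < Rv b. Proof. by case: HPF => _ [H _]. Qed.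
Lemma Rv_sum : rsum Rv = 1. Proof. by case: HPF => _ [_ [H _]]; rewrite -foldr_rsum. Qed.
Lemma Rv_eig b : rsum (fun c => INR (subst_mx theta b c) * Rv c) = lam * Rv b.
Proof. by case: HPF => _ [_ [_ H]]; rewrite -foldr_rsum. Qed.
Lemma Rv_le1 b : Rv b <= 1.
Proof. rewrite -Rv_sum; apply: rsum_term => c; have := Rv_pos c; lra. Qed.

Lemma eig_pow k i : rsum (fun j => INR (mx_pow theta k i j) * Rv j) = lam ^ k * Rv i.
Proof.
elim: k i => [|k IH] i.
  rewrite /rsum (bigD1 i) //= eqxx big1 /=; first by ring.
  by move=> j /negbTE; rewrite eq_sym => ->; rewrite /=; ring.
rewrite (rsum_ext (g := fun j => rsum (fun c => INR (subst_mx theta i c) * INR (mx_pow theta k c j) * Rv j))); last first.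
  move=> j; rewrite mx_powS INR_sum -(Rmult_comm (Rv j)) -rsum_scal.
  by apply: rsum_ext => c; rewrite mult_INR; ring.
rewrite -rsum_swap (rsum_ext (g := fun c => INR (subst_mx theta i c) * (lam ^ k * Rv c))); last first.
  move=> c; rewrite -IH -rsum_scal; apply: rsum_ext => j; ring.
rewrite (rsum_ext (g := fun c => lam ^ k * (INR (subst_mx theta i c) * Rv c))); last by move=> c; ring.
by rewrite rsum_scal Rv_eig /=; ring.
Qed.

Lemma step (B : A -> A -> R) (Lam lo hi : R) (x : A -> R) :
  (forall i j, 0 <= B i j) -> (forall i, 1 <= B i a0) ->
  (forall i, rsum (fun j => B i j * Rv j) = Lam * Rv i) ->
  (forall j, lo * Rv j <= x j <= hi * Rv j) ->
  exists lo', Lam * lo <= lo' /\ forall i,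
    lo' * Rv i <= rsum (fun j => B i j * x j) <= (lo' + (Lam - Rv a0) * (hi - lo)) * Rv i.
Proof.
move=> HB0 HB1 HBe Hx.
exists (Lam * lo + (x a0 - lo * Rv a0)); split; first by have := Hx a0; lra.
move=> i; have Ri := Rv_pos i; have Ri1 := Rv_le1 i.
have E1 : rsum (fun j => B i j * x j) - Lam * lo * Rv i = rsum (fun j => B i j * (x j - lo * Rv j)).
  rewrite (rsum_ext (f := fun j => B i j * (x j - lo * Rv j)) (g := fun j => B i j * x j - lo * (B i j * Rv j))); last by move=> j; ring.
  by rewrite rsum_sub rsum_scal HBe; ring.
have E2 : Lam * hi * Rv i - rsum (fun j => B i j * x j) = rsum (fun j => B i j * (hi * Rv j - x j)).
  rewrite (rsum_ext (f := fun j => B i j * (hi * Rv j - x j)) (g := fun j => hi * (B i j * Rv j) - B i j * x j)); last by move=> j; ring.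
  by rewrite rsum_sub rsum_scal HBe; ring.
have T1 : B i a0 * (x a0 - lo * Rv a0) <= rsum (fun j => B i j * (x j - lo * Rv j)).
  apply: (rsum_term (f := fun j => B i j * (x j - lo * Rv j))) => j.
  by apply: Rmult_le_pos; [apply: HB0 | have := Hx j; lra].
have T2 : B i a0 * (hi * Rv a0 - x a0) <= rsum (fun j => B i j * (hi * Rv j - x j)).
  apply: (rsum_term (f := fun j => B i j * (hi * Rv j - x j))) => j.
  by apply: Rmult_le_pos; [apply: HB0 | have := Hx j; lra].
have Ha := Hx a0; have Hb := HB1 i.
have U1 : (x a0 - lo * Rv a0) * Rv i <= B i a0 * (x a0 - lo * Rv a0) by nra.
have U2 : (hi * Rv a0 - x a0) * Rv i <= B i a0 * (hi * Rv a0 - x a0) by nra.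
split; nra.
Qed.


Definition xv k c b := INR (mx_pow theta k b c).
Definition Hc := rsum (fun c => rsum (fun b => xv p c b / Rv b)).

Lemma Hc_ge c b : xv p c b / Rv b <= Hc.
Proof.
have T : forall c b, 0 <= xv p c b / Rv b.
  move=> c' b'; apply: Rdiv_le_0_compat; [apply: pos_INR | apply: Rv_pos].
apply: Rle_trans (rsum_term (f := fun c => rsum (fun b => xv p c b / Rv b)) c _).
  by apply: (rsum_term (f := fun b => xv p c b / Rv b)).
by move=> c'; apply: rsum_ge0.
Qed.

Lemma Hc_ge0 : 0 <= Hc.
Proof. have := Hc_ge a0 a0; have : 0 <= xv p a0 a0 / Rv a0 by apply: Rdiv_le_0_compat; [apply: pos_INR | apply: Rv_pos]. lra. Qed.

Lemma B1 i : 1 <= INR (mx_pow theta p i a0).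
Proof. by have := Hp i a0; case: (mx_pow theta p i a0) => // n _; rewrite S_INR; have := pos_INR n; lra. Qed.

Lemma xv_step k c i : xv (p + k) c i = rsum (fun j => INR (mx_pow theta p i j) * xv k c j).
Proof. by rewrite /xv mx_pow_add INR_sum; apply: rsum_ext => j; rewrite mult_INR. Qed.

Lemma iter_bound t c : exists lo, (lam ^ p) ^ t <= lo /\ forall b,
  lo * Rv b <= xv (p * t.+1) c b <= (lo + (lam ^ p - Rv a0) ^ t * Hc) * Rv b.
Proof.
elim: t => [|t [lo [Hlo Hb]]].
  exists 1; split; first by rewrite /=; lra.
  move=> b; rewrite muln1 /=; have Rb := Rv_pos b; have Rb1 := Rv_le1 b.
  have X1 : 1 <= xv p c b.
    by have := Hp b c; rewrite /xv; case: (mx_pow theta p b c) => // n _; rewrite S_INR; have := pos_INR n; lra.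
  have X2 := Hc_ge c b.
  have X3 : xv p c b = xv p c b / Rv b * Rv b by field; lra.
  split; first nra.
  rewrite X3; apply: Rmult_le_compat_r; lra.
have [lo' [H1 H2]] := step (B := fun i j => INR (mx_pow theta p i j)) (Lam := lam ^ p)
  (lo := lo) (hi := lo + (lam ^ p - Rv a0) ^ t * Hc) (x := xv (p * t.+1) c)
  (fun i j => pos_INR _) B1 (eig_pow p) Hb.
exists lo'; split.
  rewrite /=; have : 0 <= lam ^ p by apply: pow_le; have := lam_pos; lra.
  nra.
move=> b; rewrite mulnS xv_step.
by have := H2 b; rewrite /=; set u := (lam ^ p - Rv a0) ^ t; move=> H; replace (lo' + (lam ^ p - Rv a0) * u * Hc) with (lo' + (lam ^ p - Rv a0) * (lo + u * Hc - lo)) by ring.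
Qed.

Lemma lamp_ge1 : 1 <= lam ^ p.
Proof.
have E := eig_pow p a0.
have T : INR (mx_pow theta p a0 a0) * Rv a0 <= rsum (fun j => INR (mx_pow theta p a0 j) * Rv j).
  apply: (rsum_term (f := fun j => INR (mx_pow theta p a0 j) * Rv j)) => j.
  by apply: Rmult_le_pos; [apply: pos_INR | have := Rv_pos j; lra].
have := B1 a0; have := Rv_pos a0; nra.
Qed.

Lemma pf_conv eta : 0 < eta -> exists k, forall c b,
  Rabs (xv k c b - Rv b * rsum (fun j => xv k c j)) <= eta * rsum (fun j => xv k c j).
Proof.
move=> He.
have L1 := lamp_ge1; have g0 := Rv_pos a0; have g1 := Rv_le1 a0; have H0 := Hc_ge0.
set L := lam ^ p in L1 *; set g := Rv a0 in g0 g1 *.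
set rho := (L - g) / L.
have Hrho : Rabs rho < 1.
  rewrite Rabs_right; last by apply: Rle_ge; apply: Rdiv_le_0_compat; lra.
  have -> : rho = 1 - g * / L by rewrite /rho; field; lra.
  have : 0 < g * / L by apply: Rmult_lt_0_compat => //; apply: Rinv_0_lt_compat; lra.
  lra.
have [T HT] : exists T, forall n, (n >= T)%coq_nat -> Rabs (rho ^ n) < eta / (Hc + 1).
  by apply: pow_lt_1_zero => //; apply: Rdiv_lt_0_compat; lra.
have HT1 := HT T (le_n T); clear HT; rename HT1 into HT.
exists (muln p T.+1) => c b.
have [lo [Hlo Hb]] := iter_bound T c.
set W := (L - g) ^ T * Hc in Hb.
have EW : W = rho ^ T * Hc * L ^ T.
  rewrite /W; have -> : (L - g) ^ T = rho ^ T * L ^ T.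
    by rewrite -Rpow_mult_distr; congr (_ ^ _); rewrite /rho; field; lra.
  ring.
have r0 : 0 <= rho ^ T by apply: pow_le; apply: Rdiv_le_0_compat; lra.
have LT : 0 < L ^ T by apply: pow_lt; lra.
have W1 : rho ^ T * Hc <= eta.
  rewrite Rabs_right in HT; last by apply: Rle_ge.
  have : eta / (Hc + 1) * Hc <= eta.
    have -> : eta / (Hc + 1) * Hc = eta - eta / (Hc + 1) by field; lra.
    have : 0 < eta / (Hc + 1) by apply: Rdiv_lt_0_compat; lra.
    lra.
  move=> Hq; apply: Rle_trans Hq; apply: Rmult_le_compat_r; lra.
have Hlo' : L ^ T <= lo by [].
have W2 : W <= eta * lo.
  rewrite EW; apply: Rle_trans (Rmult_le_compat_r (L ^ T) _ _ _ W1) _; first lra.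
  apply: Rmult_le_compat_l; lra.
have W0 : 0 <= W by rewrite EW; apply: Rmult_le_pos; [apply: Rmult_le_pos|]; lra.
set S := rsum (fun j => xv (p * T.+1) c j).
have S1 : lo <= S.
  rewrite -(Rmult_1_r lo) -Rv_sum -rsum_scal; apply: rsum_le => j; by case: (Hb j).
have S2 : S <= lo + W.
  rewrite -(Rmult_1_r (lo + W)) -Rv_sum -rsum_scal; apply: rsum_le => j; by case: (Hb j).
have Rb := Rv_pos b; have Rb1 := Rv_le1 b.
have [X1 X2] := Hb b.
apply: Rabs_le; split; nra.
Qed.

End PF.

Lemma nat_above (x : R) : exists n : nat, (x <= INR n)%R.
Proof.
have [H1 _] := archimed x.
case: (Z.lt_ge_cases 0 (up x)) => Hz.
  exists (Z.to_nat (up x)); rewrite INR_IZR_INZ Znat.Z2Nat.id; [lra | apply: Z.lt_le_incl; exact: Hz].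
exists 0; have := IZR_le _ _ Hz; rewrite /=; lra.
Qed.

Lemma cat_eq_cases (T : Type) (w1 w2 p q : seq T) : w1 ++ w2 = p ++ q ->
  (exists r, p = w1 ++ r /\ w2 = r ++ q) \/ (exists r, w1 = p ++ r /\ q = r ++ w2).
Proof.
elim: w1 p => [|x w1 IH] p /=; first by move=> ->; left; exists p.
case: p => [|y p] /=; first by move=> <-; right; exists (x :: w1).
case=> -> /IH [[r [-> ->]]|[r [-> ->]]]; [left|right]; by exists r.
Qed.

Section Freq.
Variable A : finType.
Variable theta : A -> seq (seq A).
Hypothesis Hrs : is_rand_subst theta.
Hypothesis Hsc : semi_compatible theta.
Variables (lam : R) (Rv : A -> R).
Hypothesis HPF : PF_data theta lam Rv.
Local Open Scope R_scope.

Definition dev (b : A) (x : seq A) := INR (count_mem b x) - Rv b * INR (size x).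

Lemma dev_cat b x y : dev b (x ++ y) = dev b x + dev b y.
Proof. rewrite /dev count_cat size_cat !plus_INR; ring. Qed.

Lemma dev_small b x : Rabs (dev b x) <= INR (size x).
Proof.
have H1 : (count_mem b x <= size x)%nat by apply: count_size.
have H2 := le_INR _ _ (elimT leP H1).
have H3 := pos_INR (count_mem b x).
have R1 := Rv_pos HPF b; have R2 := Rv_le1 HPF b.
rewrite /dev; apply: Rabs_le; split; nra.
Qed.

Lemma rel_nil k w : trel theta k [::] w -> w = [::].
Proof.
elim: k w => [|k IH] w; first by move/rel0.
by case/relS => s [/IH -> ]; rewrite /= inE => /eqP.
Qed.

Variable k : nat.
Variable eta : R.
Hypothesis Heta : 0 <= eta.
Hypothesis Hblk : forall c b, Rabs (xv theta k c b - Rv b * rsum (fun j => xv theta k c j))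
   <= eta * rsum (fun j => xv theta k c j).
Definition Bk := (\max_(c : A) \sum_(j : A) mx_pow theta k j c)%nat.

Lemma blk_size c w : trel theta k [:: c] w -> (size w <= Bk)%nat.
Proof.
move=> H; rewrite size_count (eq_bigr _ (fun j _ => count_rel1 Hrs Hsc j H)).
exact: (leq_bigmax (F := fun c => \sum_(j : A) mx_pow theta k j c) c).
Qed.

Lemma blk_dev c w b : trel theta k [:: c] w -> Rabs (dev b w) <= eta * INR (size w).
Proof.
move=> H.
have E1 : INR (size w) = rsum (fun j => xv theta k c j).
  by rewrite size_count INR_sum; apply: rsum_ext => j; rewrite (count_rel1 Hrs Hsc j H).
rewrite /dev E1 (count_rel1 Hrs Hsc b H); exact: Hblk.
Qed.

Lemma prefix_dev u w b : trel theta k u w -> forall p q, w = p ++ q ->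
  Rabs (dev b p) <= eta * INR (size p) + INR Bk.
Proof.
have B0 := pos_INR Bk.
elim: u w => [|a u IH] w.
  move/rel_nil => -> [|//] q _; rewrite /dev /= Rmult_0_r Rminus_0_r Rabs_R0; lra.
rewrite -cat1s => /rel_split [w1 [w2 [-> H1 H2]]] p q /cat_eq_cases [[r [-> E]]|[r [E _]]].
  have := IH _ H2 r q E; have := blk_dev b H1.
  rewrite dev_cat size_cat plus_INR => X Y.
  have := Rabs_triang (dev b w1) (dev b r); lra.
have S1 := blk_size H1; rewrite E size_cat in S1.
have S2 : (size p <= Bk)%nat by apply: leq_trans S1; apply: leq_addr.
have := le_INR _ _ (elimT leP S2); have := dev_small b p.
have : 0 <= eta * INR (size p) by apply: Rmult_le_pos => //; apply: pos_INR.
lra.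
Qed.

Lemma infix_dev u w b : trel theta k u w -> forall s1 v s2, w = s1 ++ v ++ s2 ->
  Rabs (dev b v) <= eta * INR (size v) + 2 * INR Bk.
Proof.
have B0 := pos_INR Bk.
elim: u w => [|a u IH] w.
  move/rel_nil => -> s1 v s2; case: v => [_|x v]; last by case: s1.
  rewrite /dev /= Rmult_0_r Rminus_0_r Rabs_R0; lra.
rewrite -cat1s => /rel_split [w1 [w2 [-> H1 H2]]] s1 v s2 /cat_eq_cases [[r [E1 E2]]|[r [E1 E2]]].
  exact: IH H2 r v s2 E2.
have S1 := blk_size H1; rewrite E1 size_cat in S1.
case/esym/cat_eq_cases: E2 => [[r' [E3 E4]]|[r' [E3 E4]]].
  have := prefix_dev b H2 E4.
  have S2 : (size r <= Bk)%nat by apply: leq_trans S1; apply: leq_addl.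
  have := le_INR _ _ (elimT leP S2); have := dev_small b r.
  rewrite E3 dev_cat size_cat plus_INR.
  have : 0 <= eta * INR (size r) by apply: Rmult_le_pos => //; apply: pos_INR.
  have := Rabs_triang (dev b r) (dev b r'); lra.
have S2 : (size v <= Bk)%nat.
  by apply: leq_trans S1; rewrite E3 size_cat; apply: leq_trans (leq_addl _ _); apply: leq_addr.
have := le_INR _ _ (elimT leP S2); have := dev_small b v.
have : 0 <= eta * INR (size v) by apply: Rmult_le_pos => //; apply: pos_INR.
lra.
Qed.

End Freq.

Section FreqL.
Variable A : finType.
Variable theta : A -> seq (seq A).
Hypothesis Hrs : is_rand_subst theta.
Hypothesis Hsc : semi_compatible theta.
Variables (lam : R) (Rv : A -> R).
Hypothesis HPF : PF_data theta lam Rv.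
Variable p : nat.
Hypothesis Hp : forall b a, (0 < mx_pow theta p b a)%nat.
Variable a0 : A.
Local Open Scope R_scope.

Lemma size_rel1 m a w : trel theta m [:: a] w -> size w = (\sum_(j : A) mx_pow theta m j a)%nat.
Proof. by move=> H; rewrite size_count; apply: eq_bigr => j _; rewrite (count_rel1 Hrs Hsc j H). Qed.

Lemma freqL delta : 0 < delta -> exists M0 : nat, forall v, inL theta v -> (M0 <= size v)%nat ->
  forall b, Rabs (dev Rv b v) <= delta * INR (size v).
Proof.
move=> Hd.
have [k Hk] := pf_conv HPF Hp a0 (eta := delta / 2) ltac:(lra).
set Bsm := (\max_(a : A) \max_(m < k) \sum_(j : A) mx_pow theta m j a)%nat.
have [M1 HM1] := nat_above (4 * INR (Bk theta k) / delta).
exists (Bsm.+1 + M1)%nat => v [a [m [w [Hw Hvw]]]] Hsz b.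
case/infixP: Hvw => s [s' Ew].
have Hsv : (size v <= size w)%nat by rewrite Ew !size_cat addnCA leq_addr.
case: (ltnP m k) => Hmk.
  exfalso; move: Hsz; apply/negP; rewrite -ltnNge.
  apply: leq_ltn_trans Hsv _; rewrite (size_rel1 Hw).
  apply: leq_trans (leq_addr _ _); rewrite ltnS.
  apply: leq_trans (leq_bigmax (F := fun a => \max_(m < k) \sum_(j : A) mx_pow theta m j a) a).
  exact: (leq_bigmax (F := fun m : 'I_k => \sum_(j : A) mx_pow theta m j a) (Ordinal Hmk)).
have Em : m = (k + (m - k))%nat by rewrite subnKC.
move: Hw; rewrite theta_powE Em => /rel_add [u [_ Hu]].
have := infix_dev Hrs Hsc HPF (k := k) (eta := delta / 2) ltac:(lra) Hk b Hu Ew.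
have : INR M1 <= INR (size v).
  by apply: le_INR; apply/leP; apply: leq_trans Hsz; apply: leq_addl.
have B0 := pos_INR (Bk theta k).
have : 4 * INR (Bk theta k) <= delta * INR M1.
  have := Rmult_le_compat_l delta _ _ ltac:(lra) HM1.
  by have -> : delta * (4 * INR (Bk theta k) / delta) = 4 * INR (Bk theta k) by field; lra.
nra.
Qed.

End FreqL.

Lemma pboolP (P : Prop) : pbool P <-> P.
Proof. by rewrite /pbool; case: excluded_middle_informative. Qed.

Section Ext.
Variable A : finType.
Variable theta : A -> seq (seq A).
Hypothesis Hrs : is_rand_subst theta.
Hypothesis Hsc : semi_compatible theta.

Lemma tw_exists u : exists w, w \in theta_word theta u.
Proof.
elim: u => [|a u [w Hw]]; first by exists [::]; rewrite inE.
case: (Hrs a) => Hne _; case E: (theta a) Hne => [//|x s] _.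
by exists (x ++ w); apply/allpairsP; exists (x, w); rewrite E inE eqxx.
Qed.

Lemma rel_exists k u : exists w, trel theta k u w.
Proof.
elim: k => [|k [s Hs]]; first by exists u; apply/rel0.
have [w Hw] := tw_exists s; exists w; apply/relS; by exists s.
Qed.

Lemma tw_size u w : w \in theta_word theta u -> (size u <= size w)%nat.
Proof.
elim: u w => [|a u IH] w //= /allpairsP [[x y] [/= Hx Hy ->]].
rewrite size_cat -addn1 addnC leq_add ?IH //.
by case: (Hrs a) => _ /(_ x Hx); case: x {Hx}.
Qed.

Lemma rel_size k u w : trel theta k u w -> (size u <= size w)%nat.
Proof.
elim: k w => [|k IH] w; first by move/rel0 ->.
by case/relS => s [/IH H1 /tw_size H2]; apply: leq_trans H2.
Qed.

Variable p : nat.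
Hypothesis Hp : forall b a, (0 < mx_pow theta p b a)%nat.
Hypothesis Hnt : exists b x, x \in theta b /\ (2 <= size x)%nat.

Lemma nonfirst a : exists q z1 z2, z1 <> [::] /\ trel theta q [:: a] (z1 ++ a :: z2).
Proof.
have [u Hu] := rel_exists p.+1 [:: a].
have Hsu : (2 <= size u)%nat.
  case: Hnt => b [x [Hx Hsx]].
  rewrite (size_rel1 Hrs Hsc Hu) (eq_bigr _ (fun j _ => mx_powS theta p j a)) /=.
  apply: leq_trans Hsx _; rewrite size_count.
  apply: leq_sum => j _; rewrite (count_theta Hrs Hsc j Hx).
  rewrite (bigD1 b) //=; apply: leq_trans (leq_addr _ _).
  by rewrite leq_pmulr.
case: u Hu Hsu => [|e [|f u]] // Hu _.
have [we Hwe] := rel_exists p [:: e].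
have [yf Hyf] := rel_exists p [:: f].
have [wr Hwr] := rel_exists p u.
have Ha : a \in yf by rewrite -has_pred1 has_count (count_rel1 Hrs Hsc a Hyf) Hp.
move: Hyf; case/splitPr: Ha => y1 y2 Hyf.
exists (p + p.+1)%nat, (we ++ y1), (y2 ++ wr); split.
  by have := rel_size Hwe; case: we {Hwe}.
apply/rel_add; exists [:: e, f & u]; split => //.
rewrite -!catA /= -cat1s; apply: rel_cat => //.
rewrite -cat1s (_ : y1 ++ a :: y2 ++ wr = (y1 ++ a :: y2) ++ wr); last by rewrite -catA.
by apply: rel_cat.
Qed.

Lemma left_ext v : inL theta v -> exists c, inL theta (c :: v).
Proof.
case=> a [m [w [Hw /infixP [s [s' Ew]]]]].
have [q [z1 [z2 [Hz1 Hz]]]] := nonfirst a.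
have [Z1 HZ1] := rel_exists m z1.
have [Z2 HZ2] := rel_exists m z2.
have HZ : trel theta m (z1 ++ a :: z2) (Z1 ++ w ++ Z2).
  by rewrite -cat1s; apply: rel_cat => //; apply: rel_cat.
have NE : Z1 ++ s <> [::].
  move=> E; have : Z1 = [::] by case: Z1 E {HZ1 HZ}.
  by move=> E1; have := rel_size HZ1; rewrite E1 leqn0 size_eq0 => /eqP /Hz1.
have HW : trel theta (m + q) [:: a] ((Z1 ++ s) ++ v ++ s' ++ Z2).
  have -> : (Z1 ++ s) ++ v ++ s' ++ Z2 = Z1 ++ w ++ Z2 by rewrite Ew -!catA.
  apply/rel_add; by exists (z1 ++ a :: z2).
move: (Z1 ++ s) NE HW => P.
case/lastP: P => // P c _ HW.
exists c, a, (m + q)%nat, (rcons P c ++ v ++ s' ++ Z2); split => //.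
apply/infixP; exists P, (s' ++ Z2).
by rewrite -cats1 -!catA.
Qed.

Lemma Lcard_S m : (Lcard theta m <= Lcard theta m.+1)%nat.
Proof.
rewrite /Lcard.
apply: leq_trans (leq_imset_card (@behead_tuple m.+1 A) _).
apply: subset_leq_card; apply/subsetP => t.
rewrite inE => /pboolP /left_ext [c Hc].
apply/imsetP; exists [tuple of c :: t]; last by apply: val_inj.
by rewrite inE; apply/pboolP.
Qed.

Lemma Lcard_mono m m' : (m <= m')%nat -> (Lcard theta m <= Lcard theta m')%nat.
Proof.
move/subnK <-; elim: (m' - m)%nat => [|d IH] //.
by apply: leq_trans IH (Lcard_S _).
Qed.

End Ext.

Section P7S.
Local Open Scope R_scope.

Lemma floorR_spec x : 0 <= x -> INR (floorR x) <= x /\ x < INR (floorR x) + 1.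
Proof.
move=> Hx; have [H1 H2] := base_Int_part x.
have Hz : (0 <= Int_part x)%Z.
  have H3 : (-1 < Int_part x)%Z by apply: lt_IZR; rewrite /=; lra.
  exact: (proj1 (Z.lt_pred_le 0 (Int_part x)) H3).
rewrite /floorR INR_IZR_INZ Znat.Z2Nat.id //; lra.
Qed.

Lemma le_floorR m x : 0 <= x -> INR m <= x -> (m <= floorR x)%nat.
Proof.
move=> Hx Hm; have [_ H] := floorR_spec Hx.
have : INR m < INR (floorR x).+1 by rewrite S_INR; lra.
by move/INR_lt/ltP.
Qed.

Lemma floorR_le m x : 0 <= x -> x <= INR m -> (floorR x <= m)%nat.
Proof. move=> Hx Hm; have [H _] := floorR_spec Hx; apply/leP; apply: INR_le; lra. Qed.

Lemma count_interval (lo hi : R) (B : nat) : 0 <= lo -> lo <= hi ->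
  INR (size [seq m <- iota 0 B | pbool (lo <= INR m <= hi)]) <= hi - lo + 2.
Proof.
move=> Hlo Hlh.
set s := [seq m <- _ | _].
set c := floorR lo; set d := floorR hi.
have Hs : {subset s <= iota c (d.+1 - c)}.
  move=> m; rewrite mem_filter => /andP [/pboolP [H1 H2] _].
  have Hc : (c <= m)%nat by apply: floorR_le.
  have Hd : (m <= d)%nat by apply: le_floorR => //; lra.
  rewrite mem_iota Hc /= subnKC ?ltnS //.
  by apply: leq_trans Hc _; apply: leq_trans Hd _.
have Hu : uniq s by apply: filter_uniq; apply: iota_uniq.
have := uniq_leq_size Hu Hs; rewrite size_iota => /leP /le_INR.
have [C1 C2] := floorR_spec Hlo; have [D1 D2] := floorR_spec (Rle_trans _ _ _ Hlo Hlh).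
case: (leqP c d.+1) => Hcd.
  rewrite minus_INR; last by apply/leP.
  rewrite S_INR /c /d => HH.
move: C1 C2 D1 D2 HH; clear; set x := INR (floorR hi); set y := INR (floorR lo); set z := INR (size s).
lra.
move: Hcd => /ltnW; rewrite -subn_eq0 => /eqP ->; rewrite /=; lra.
Qed.

Lemma rs_le (T : eqType) (s : seq T) (f g : T -> R) : (forall x, x \in s -> f x <= g x) ->
  \big[Rplus/0]_(x <- s) f x <= \big[Rplus/0]_(x <- s) g x.
Proof.
elim: s => [|x s IH] H; first by rewrite !big_nil; lra.
rewrite !big_cons; apply: Rplus_le_compat; first by apply: H; rewrite inE eqxx.
by apply: IH => y Hy; apply: H; rewrite inE Hy orbT.
Qed.

Section Helpers.
Variable T : Type.

Lemma rs_const (s : seq T) (k : R) : \big[Rplus/0]_(x <- s) k = INR (size s) * k.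
Proof.
elim: s => [|x s IH]; first by rewrite big_nil /=; ring.
by rewrite big_cons IH (_ : size (x :: s) = (size s).+1) // S_INR; ring.
Qed.

Lemma size_flatten_map (U : Type) (s : seq T) (f : T -> seq U) :
  INR (size (flatten [seq f x | x <- s])) = \big[Rplus/0]_(x <- s) INR (size (f x)).
Proof.
elim: s => [|x s IH]; first by rewrite big_nil.
by rewrite big_cons /= size_cat plus_INR IH.
Qed.
End Helpers.

Section Prod.
Variable A : finType.

Lemma INR_prodA (n : A -> nat) : INR (\prod_(b : A) n b) = prodA (fun b => INR (n b)).
Proof.
rewrite /prodA -big_enum /=; elim: (enum A) => [|x s IH]; first by rewrite big_nil.
by rewrite big_cons /= mult_INR IH.
Qed.

Lemma prodA_le (f g : A -> R) : (forall b, 0 <= f b <= g b) -> prodA f <= prodA g.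
Proof.
move=> H; rewrite /prodA; elim: (enum A) => [|x s IH] /=; first lra.
have [H1 H2] := H x.
have H3 : 0 <= foldr Rmult 1 [seq f i | i <- s].
  elim: s {IH} => [|y s IH'] /=; first lra.
  by apply: Rmult_le_pos => //; case: (H y).
by apply: Rmult_le_compat.
Qed.

Lemma prodA_ge0 (f : A -> R) : (forall b, 0 <= f b) -> 0 <= prodA f.
Proof.
move=> H; rewrite /prodA; elim: (enum A) => [|x s IH] /=; first lra.
by apply: Rmult_le_pos.
Qed.

Lemma rsum_const (k : R) : rsum (fun _ : A => k) = INR #|A| * k.
Proof.
rewrite /rsum big_const; elim: #|A| => [|n IH]; first by rewrite /=; ring.
by rewrite iterS IH S_INR; ring.
Qed.
End Prod.

End P7S.

Section Main.
Variable A : finType.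
Variable theta : A -> seq (seq A).
Hypothesis Hrs : is_rand_subst theta.
Hypothesis Hsc : semi_compatible theta.

Lemma undup_tw u : (size (undup (theta_word theta u)) <= \prod_(b : A) expn (card_img theta b) (count_mem b u))%nat.
Proof.
elim: u => [|a u IH].
  by rewrite big1 //= => b _; rewrite expn0.
rewrite /=.
apply: (@leq_trans (size [seq x ++ y | x <- undup (theta a), y <- undup (theta_word theta u)])).
  apply: uniq_leq_size; first exact: undup_uniq.
  move=> z; rewrite mem_undup => /allpairsP [[x y] [/= Hx Hy ->]].
  by apply/allpairsP; exists (x, y); rewrite !mem_undup.
rewrite size_allpairs.
rewrite (eq_bigr (fun b => expn (card_img theta b) (a == b) * expn (card_img theta b) (count_mem b u))); last first.
  by move=> b _; rewrite -expnD.
rewrite big_split /= (bigD1 a) //= eqxx expn1 big1 ?muln1; last first.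
  by move=> b /negbTE; rewrite eq_sym => ->; rewrite expn0.
by rewrite leq_mul2l IH orbT.
Qed.

Lemma card_img_pos b : (0 < card_img theta b)%nat.
Proof.
rewrite /card_img; have := head_in Hrs b; move: (head _ _) => x.
by rewrite -mem_undup; case: (undup _).
Qed.

Lemma ell1_sum c : ell1 theta c = (\sum_(b : A) subst_mx theta b c)%nat.
Proof. by rewrite /ell1 size_count. Qed.

Lemma size_tw u t : t \in theta_word theta u ->
  size t = (\sum_(c : A) count_mem c u * ell1 theta c)%nat.
Proof.
move=> Ht; rewrite size_count (eq_bigr _ (fun b _ => count_tw Hrs Hsc b Ht)).
rewrite (eq_bigr _ (fun b _ => sum_seq_count u (fun c => subst_mx theta b c))) exchange_big /=.
by apply: eq_bigr => c _; rewrite ell1_sum big_distrr.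
Qed.

Lemma ell1_pos c : (0 < ell1 theta c)%nat.
Proof. by rewrite /ell1; have := head_in Hrs c; case: (Hrs c) => _ /[apply]; case: (head _ _). Qed.

Lemma ell1_le c : (ell1 theta c <= Kmax theta)%nat.
Proof. exact: (leq_bigmax (F := ell1 theta) c). Qed.

End Main.

Lemma rsum_abs (A : finType) (f : A -> R) : (Rabs (rsum f) <= rsum (fun c => Rabs (f c)))%R.
Proof.
rewrite /rsum; apply: (big_rec2 (fun x y => Rabs x <= y)%R); first by rewrite Rabs_R0; lra.
by move=> i x y _ H; apply: Rle_trans (Rabs_triang _ _) _; lra.
Qed.

Lemma div_le_l (x y z : R) : (0 < y -> x <= z * y -> x / y <= z)%R.
Proof.
move=> Hy H; have Hi : (0 <= / y)%R by left; apply: Rinv_0_lt_compat.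
have := Rmult_le_compat_r _ _ _ Hi H.
have -> : (z * y * / y = z)%R by field; lra.
by [].
Qed.

Lemma div_ge_r (x y z : R) : (0 < y -> z * y <= x -> z <= x / y)%R.
Proof.
move=> Hy H; have Hi : (0 <= / y)%R by left; apply: Rinv_0_lt_compat.
have := Rmult_le_compat_r _ _ _ Hi H.
have -> : (z * y * / y = z)%R by field; lra.
by [].
Qed.

Section Good.
Variable A : finType.
Variable theta : A -> seq (seq A).
Hypothesis Hrs : is_rand_subst theta.
Hypothesis Hsc : semi_compatible theta.
Variables (lam : R) (Rv : A -> R).
Hypothesis HPF : PF_data theta lam Rv.
Local Open Scope R_scope.

Definition CC := INR #|A| * INR (Kmax theta).

Lemma lam_ell : rsum (fun c => Rv c * INR (ell1 theta c)) = lam.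
Proof.
rewrite (rsum_ext (g := fun c => rsum (fun b => INR (subst_mx theta b c) * Rv c))); last first.
  move=> c; rewrite ell1_sum INR_sum -rsum_scal; apply: rsum_ext => b; ring.
rewrite rsum_swap (rsum_ext (g := fun b => lam * Rv b)); last by move=> b; apply: (Rv_eig HPF).
by rewrite rsum_scal (Rv_sum HPF) Rmult_1_r.
Qed.

Lemma sum_ell : rsum (fun c => INR (ell1 theta c)) <= CC.
Proof.
rewrite /CC -rsum_const; apply: rsum_le => c; apply: le_INR; apply/leP; exact: ell1_le.
Qed.

Lemma size_tw_R u t : t \in theta_word theta u ->
  INR (size t) = rsum (fun c => INR (count_mem c u) * INR (ell1 theta c)).
Proof. by move=> Ht; rewrite (size_tw Hrs Hsc Ht) INR_sum; apply: rsum_ext => c; rewrite mult_INR. Qed.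

Variable delta : R.
Hypothesis Hd : 0 < delta.
Hypothesis Hdl : delta * CC < lam.
Variable M0 : nat.
Hypothesis HM0 : forall v, inL theta v -> (M0 <= size v)%nat ->
  forall b, Rabs (dev Rv b v) <= delta * INR (size v).

Lemma good N u t : (Kmax theta * M0 <= N)%nat -> inL theta u -> t \in theta_word theta u -> size t = N ->
  INR N / (lam + delta * CC) <= INR (size u) <= INR N / (lam - delta * CC) /\
  forall b, INR (count_mem b u) <= (Rv b + delta) * INR (size u).
Proof.
move=> HN Hu Ht Hs.
have Hsu : (M0 <= size u)%nat.
  have Kp : (0 < Kmax theta)%nat.
    have := Rv_sum HPF; rewrite /rsum -big_enum /=; case E: (enum A) => [|a0 s].
      by rewrite big_nil => H; exfalso; lra.
    by move=> _; apply: leq_trans (ell1_le theta a0); apply: (ell1_pos Hrs).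
  rewrite -(leq_pmul2l Kp); apply: leq_trans HN _.
  rewrite -Hs (size_tw Hrs Hsc Ht) size_count big_distrr /=.
  by apply: leq_sum => c _; rewrite mulnC leq_mul2r (ell1_le theta c) orbT.
have Hf := HM0 Hu Hsu.
have L0 := lam_pos HPF.
remember (INR (size u)) as s eqn:Es.
have s0 : 0 <= s by rewrite Es; apply: pos_INR.
have EN : INR N - lam * s = rsum (fun c => dev Rv c u * INR (ell1 theta c)).
  have -> : lam * s = rsum (fun c => s * (Rv c * INR (ell1 theta c))) by rewrite rsum_scal lam_ell; ring.
  rewrite -Hs (size_tw_R Ht) -rsum_sub.
  by apply: rsum_ext => c; rewrite /dev -Es; ring.
have B : Rabs (rsum (fun c => dev Rv c u * INR (ell1 theta c))) <= delta * s * CC.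
  apply: Rle_trans (rsum_abs _) _.
  apply: Rle_trans (Rmult_le_compat_l (delta * s) _ _ _ sum_ell); last by apply: Rmult_le_pos; lra.
  rewrite -rsum_scal; apply: rsum_le => c.
  rewrite Rabs_mult (Rabs_right (INR _)); last by apply: Rle_ge; apply: pos_INR.
  apply: Rmult_le_compat_r; first by apply: pos_INR.
  by have := Hf c; rewrite -?Es.
rewrite -EN in B.
have B1 := Rle_trans _ _ _ (Rle_abs _) B.
have B2 : - (INR N - lam * s) <= delta * s * CC.
  by apply: Rle_trans B; rewrite -Rabs_Ropp; apply: Rle_abs.
have C0 : 0 <= CC by rewrite /CC; apply: Rmult_le_pos; apply: pos_INR.
split; [split|].
- apply: div_le_l; first nra.
  clear -B1; nra.
- apply: div_ge_r; first lra.
  clear -B2; nra.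
- move=> b; have := Hf b; rewrite /dev -Es => H.
  have := Rle_abs (INR (count_mem b u) - Rv b * s); lra.
Qed.
End Good.

Lemma INR_expn n k : INR (expn n k) = (INR n ^ k)%R.
Proof. by elim: k => [|k IH]; rewrite ?expn0 // expnS mult_INR IH. Qed.

Section Count.
Variable A : finType.
Variable theta : A -> seq (seq A).
Hypothesis Hrs : is_rand_subst theta.
Hypothesis Hsc : semi_compatible theta.
Variables (lam : R) (Rv : A -> R).
Hypothesis HPF : PF_data theta lam Rv.
Variable p : nat.
Hypothesis Hp : forall b a, (0 < mx_pow theta p b a)%nat.
Variable a0 : A.
Hypothesis Hnt : exists b x, x \in theta b /\ (2 <= size x)%nat.
Variable eps : R.
Hypothesis Heps : (0 < eps)%R.
Hypothesis Hlt : (eps * CC theta < lam)%R.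
Local Open Scope R_scope.

Lemma CC_pos : 0 < CC theta.
Proof.
rewrite /CC; apply: Rmult_lt_0_compat; apply: lt_0_INR; apply/ltP.
  by apply/card_gt0P; exists a0.
by apply: leq_trans (ell1_le theta a0); apply: (ell1_pos Hrs).
Qed.

Lemma main_count : exists N0 : nat, forall N : nat, (N0 <= N)%nat ->
  INR (Icard theta N) <=
    INR N * (1 / (lam - eps * CC theta) - 1 / (lam + eps * CC theta))
    * INR (Lcard theta (floorR (INR N / (lam - eps * CC theta))))
    * prodA (fun a => Rpower (INR (card_img theta a)) ((Rv a + eps) * INR N / (lam - eps * CC theta))).
Proof.
have C0 := CC_pos; have L0 := lam_pos HPF.
set delta := eps / 2.
have Hd : 0 < delta by rewrite /delta; lra.
have Hdl : delta * (CC theta) < lam by rewrite /delta; nra.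
have [M0 HM0] := freqL Hrs Hsc HPF Hp a0 Hd.
set lamm := lam - eps * (CC theta); set lamp := lam + eps * (CC theta).
set gd := 1 / (lam - delta * (CC theta)) - 1 / (lam + delta * (CC theta)).
set ge := 1 / lamm - 1 / lamp.
have Hg : 0 < ge - gd.
  rewrite /ge /gd /lamm /lamp /Rdiv !Rmult_1_l.
  have H1 : / (lam - delta * (CC theta)) < / (lam - eps * (CC theta)).
    apply: Rinv_lt_contravar; last by rewrite /delta; nra.
    by apply: Rmult_lt_0_compat; rewrite /delta; nra.
  have H2 : / (lam + eps * (CC theta)) < / (lam + delta * (CC theta)).
    apply: Rinv_lt_contravar; last by rewrite /delta; nra.
    by apply: Rmult_lt_0_compat; rewrite /delta; nra.
  lra.
have [N2 HN2] := nat_above (2 / (ge - gd)).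
exists (Kmax theta * M0 + N2)%nat => N HN.
have HN1 : (Kmax theta * M0 <= N)%nat by apply: leq_trans HN; apply: leq_addr.
have HN2' : INR N2 <= INR N by apply: le_INR; apply/leP; apply: leq_trans HN; apply: leq_addl.
have Hgood := good Hrs Hsc HPF Hd Hdl HM0 HN1.
have Lm0 : 0 < lamm by rewrite /lamm; lra.
have Hld : lamm <= lam - delta * (CC theta) by rewrite /lamm /delta; nra.
pose lo := INR N / (lam + delta * (CC theta)).
pose hi := INR N / (lam - delta * (CC theta)).
pose ms := [seq m <- iota 0 N.+1 | pbool (lo <= INR m <= hi)].
pose X := INR N / lamm.
pose Pr := prodA (fun a => Rpower (INR (card_img theta a)) ((Rv a + eps) * INR N / lamm)).
pose F0 := floorR X.
pose Lset m := [set u : m.-tuple A | pbool (inL theta u)].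
pose Fu (v : seq A) := [seq t <- undup (theta_word theta v) | size t == N].
pose S := flatten [seq flatten [seq Fu (val u) | u <- enum (Lset m)] | m <- ms].
have N0 := pos_INR N.
have lo0 : 0 <= lo by apply: Rdiv_le_0_compat => //; nra.
have hiX : hi <= X.
  rewrite /X; apply: div_ge_r => //.
  have -> : hi * lamm = INR N * (lamm / (lam - delta * (CC theta))) by rewrite /hi; field; nra.
  have : lamm / (lam - delta * (CC theta)) <= 1.
    apply: div_le_l; nra.
  move=> H; rewrite -{2}(Rmult_1_r (INR N)); apply: Rmult_le_compat_l => //.
have lohi : lo <= hi.
  rewrite /lo /hi /Rdiv; apply: Rmult_le_compat_l => //.
  apply: Rinv_le_contravar; nra.
have Pr0 : 0 <= Pr.
  apply: prodA_ge0 => b; rewrite /Rpower; left; apply: exp_pos.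
have St1 : (Icard theta N <= size S)%nat.
  rewrite /Icard cardE.
  apply: (@leq_trans (size (map val (enum [set t : N.-tuple A | pbool (inL theta t /\ exists v, inL theta v /\ (t : seq A) \in theta_word theta v)])))).
    by rewrite size_map.
  apply: uniq_leq_size; first by rewrite (map_inj_uniq val_inj) enum_uniq.
  move=> x /mapP [t Ht ->]; rewrite mem_enum inE in Ht.
  move/pboolP: Ht => [HtL [v [HvL Htv]]].
  have Hst : size t = N by rewrite size_tuple.
  have [[G1 G2] _] := Hgood v t HvL Htv Hst.
  apply/flatten_mapP; exists (size v).
    rewrite mem_filter mem_iota /= add0n ltnS.
    rewrite -Hst (tw_size Hrs Htv) andbT; apply/pboolP; split; [exact: G1 | exact: G2].
  apply/flatten_mapP; exists (in_tuple v).
    by rewrite mem_enum inE; apply/pboolP.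
  by rewrite mem_filter mem_undup Htv Hst eqxx.
have St3 : forall m (u : m.-tuple A), u \in enum (Lset m) -> INR (size (Fu (val u))) <= Pr.
  move=> m u; rewrite mem_enum inE => /pboolP HuL.
  case E: (Fu (val u)) => [|t0 l]; first by rewrite /=; lra.
  have Ht0 : t0 \in Fu (val u) by rewrite E inE eqxx.
  rewrite mem_filter mem_undup in Ht0; case/andP: Ht0 => /eqP Hs0 Ht0.
  have [[G1 G2] G3] := Hgood (val u) t0 HuL Ht0 Hs0.
  rewrite -E; apply: Rle_trans (_ : INR (size (undup (theta_word theta u))) <= Pr).
    by apply: le_INR; apply/leP; rewrite size_filter count_size.
  have HU := undup_tw theta (val u).
  apply: Rle_trans; first by apply: le_INR; apply/leP; exact: HU.
  rewrite INR_prodA; apply: prodA_le => b.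
  split; first by apply: pos_INR.
  have Cb := card_img_pos Hrs b.
  have Cb1 : 1 <= INR (card_img theta b).
    by move: Cb; case: (card_img theta b) => // n _; rewrite S_INR; have := pos_INR n; lra.
  rewrite INR_expn -Rpower_pow; last lra.
  apply: Rle_Rpower => //.
  have Rb := Rv_pos HPF b.
  have E1 : (Rv b + eps) * INR N / lamm = (Rv b + eps) * X by rewrite /X /Rdiv Rmult_assoc.
  rewrite E1; apply: Rle_trans (G3 b) _.
  apply: Rmult_le_compat; [rewrite /delta; lra | apply: pos_INR | rewrite /delta; lra | exact: Rle_trans G2 hiX].
apply: Rle_trans (le_INR _ _ (elimT leP St1)) _.
rewrite /S size_flatten_map.
apply: Rle_trans (_ : \big[Rplus/0]_(m <- ms) (INR (Lcard theta F0) * Pr) <= _).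
  apply: rs_le => m Hm; rewrite size_flatten_map.
  apply: Rle_trans (rs_le (g := fun _ => Pr) (St3 m)) _.
  rewrite rs_const -cardE; apply: Rmult_le_compat_r => //.
  apply: le_INR; apply/leP; apply: Lcard_mono => //.
  move: Hm; rewrite mem_filter => /andP [/pboolP [_ H2] _].
  apply: le_floorR; first by rewrite /X; apply: Rdiv_le_0_compat.
  lra.
rewrite rs_const.
have Hms := count_interval N.+1 lo0 lohi.
have E3 : hi - lo = INR N * gd by rewrite /hi /lo /gd; field; split; nra.
have HN3 : 2 <= INR N * (ge - gd).
  have := Rmult_le_compat_r (ge - gd) _ _ ltac:(lra) (Rle_trans _ _ _ HN2 HN2').
  by have -> : 2 / (ge - gd) * (ge - gd) = 2 by field; lra.
have LP : 0 <= INR (Lcard theta F0) * Pr by apply: Rmult_le_pos => //; apply: pos_INR.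
have -> : INR N * ge * INR (Lcard theta (floorR (INR N / lamm))) * Pr = (INR N * ge) * (INR (Lcard theta F0) * Pr) by rewrite /F0 /X; ring.
apply: Rmult_le_compat_r => //.
rewrite -/ms in Hms; clear -Hms E3 HN3; nra.
Qed.

End Count.

Unset Implicit Arguments.

Section Triv.
Variable A : finType.
Variable theta : A -> seq (seq A).
Hypothesis H1 : forall b x, x \in theta b -> size x = 1%nat.

Lemma tw_size1 u w : w \in theta_word theta u -> size w = size u.
Proof.
elim: u w => [|a u IH] w /=; first by rewrite inE => /eqP ->.
by case/allpairsP => [[x y] [/= Hx Hy ->]]; rewrite size_cat (H1 _ _ Hx) (IH _ Hy).
Qed.

Lemma rel_size1 k u w : trel theta k u w -> size w = size u.
Proof.
elim: k w => [|k IH] w; first by move/rel0 ->.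
by case/relS => s [/IH <- /tw_size1].
Qed.

Lemma inL_small v : inL theta v -> (size v <= 1)%nat.
Proof.
case=> a [m [w [Hw /infixP [s [s' E]]]]].
have Hw' : trel theta m [:: a] w by [].
have := rel_size1 _ _ _ Hw'; rewrite E !size_cat /= => Hs.
by rewrite -Hs addnCA leq_addr.
Qed.
End Triv.

From mathcomp Require Import all_boot.
From Stdlib Require Import Reals.


Theorem mainTheorem6 (A : finType) (theta : A -> seq (seq A)) (lam : R) (Rv : A -> R) :
  is_rand_subst theta -> semi_compatible theta -> primitive_subst theta ->
  PF_data theta lam Rv ->
  forall eps : R, (0 < eps)%R ->
  (eps * INR #|A| * INR (Kmax theta) < lam)%R ->
  let lamm := (lam - eps * INR #|A| * INR (Kmax theta))%R in
  let lamp := (lam + eps * INR #|A| * INR (Kmax theta))%R in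
  exists N0 : nat, forall N : nat, (N0 <= N)%N ->
    (INR (Icard theta N) <=
       INR N * (1 / lamm - 1 / lamp) * INR (Lcard theta (floorR (INR N / lamm)))
       * prodA (fun a => Rpower (INR (card_img theta a)) ((Rv a + eps) * INR N / lamm)))%R.
Proof.
move=> Hrs Hsc [p [_ Hp]] HPF eps Heps Hlt lamm lamp.
have E : (eps * INR #|A| * INR (Kmax theta) = eps * CC theta)%R by rewrite /CC; ring.
rewrite /lamm /lamp E; rewrite E in Hlt; clear lamm lamp.
have [a0 _] : exists a0 : A, True.
  have := Rv_sum HPF; rewrite /rsum -big_enum /=; case: (enum A) => [|a0 s].
    by rewrite big_nil => H; exfalso; lra.
  by move=> _; exists a0.
case: (classic (exists b x, x \in theta b /\ (2 <= size x)%nat)) => Hnt.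
  have [N0 HN0] := main_count Hrs Hsc HPF Hp a0 Hnt Heps Hlt.
  exists N0 => N HN; apply: HN0; first by [] || (apply/leP; exact: HN).
have H1 : forall b x, x \in theta b -> size x = 1%nat.
  move=> b x Hx; case: (Hrs b) => _ /(_ x Hx); case: x Hx => [//|c [|d x]] //= Hx _.
  by exfalso; apply: Hnt; exists b, [:: c, d & x].
exists 2%nat => N HN.
have -> : Icard theta N = 0%nat.
  rewrite /Icard; apply/eqP; rewrite cards_eq0; apply/eqP/setP => t.
  rewrite inE in_set0; apply/negbTE/negP => /pboolP [HL _].
  have := inL_small _ _ H1 _ HL; rewrite size_tuple => HN1.
  by have := leq_trans HN HN1.
have L0 := lam_pos HPF; have C0 : (0 <= CC theta)%R by rewrite /CC; apply: Rmult_le_pos; apply: pos_INR.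
have Hm : (0 < lam - eps * CC theta)%R by lra.
apply: Rmult_le_pos; last by apply: prodA_ge0 => b; rewrite /Rpower; left; apply: exp_pos.
apply: Rmult_le_pos; last by apply: pos_INR.
apply: Rmult_le_pos; first by apply: pos_INR.
rewrite /Rdiv !Rmult_1_l.
have : (/ (lam + eps * CC theta) <= / (lam - eps * CC theta))%R.
  apply: Rinv_le_contravar => //; nra.
lra.
Qed.
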